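(* Let $G$ be a finite strongly semi-3-abelian 3-group, let $r\ge 1$ be an integer with $\exp(G)\le 3^{r}$, and suppose $G$ can be generated by $d$ elements. Then the nilpotency class of $G$ satisfies $c(G)\le (r-1)(d+1)+3$.
   Context: Let $p$ be a prime and $G$ a finite $p$-group. For a positive integer $i$, $G$ is called semi-$p^{i}$-abelian if for all $a,b\in G$: $(ab)^{p^{i}}=1$ if and only if $a^{p^{i}}b^{p^{i}}=1$. $G$ is called strongly semi-$p$-abelian if it is semi-$p^{i}$-abelian for every positive integer $i$. $c(G)$ denotes the nilpotency class of $G$. *)

(* Defs.v *)
From mathcomp Require Import all_boot fingroup pgroup nilpotent abelian.
Set Implicit Arguments. Unset Strict Implicit. Unset Printing Implicit Defensive.
Local Open Scope group_scope.

Definition semi_pi_abelian (gT : finGroupType) (p i : nat) (G : {set gT}) :=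
  forall a b, a \in G -> b \in G ->
    ((a * b) ^+ (p ^ i) = 1 <-> a ^+ (p ^ i) * b ^+ (p ^ i) = 1).

Definition strongly_semi_p_abelian (gT : finGroupType) (p : nat) (G : {set gT}) :=
  forall i, 0 < i -> semi_pi_abelian p i G.

Definition generated_by_at_most (gT : finGroupType) (d : nat) (G : {set gT}) :=
  exists X : {set gT}, #|X| <= d /\ <<X>> = G.

(* Main.v *)
Require Import Defs.
From mathcomp Require Import all_boot fingroup pgroup nilpotent abelian.
From mathcomp Require Import morphism quotient commutator sylow zify.

Local Open Scope group_scope.

Module Aux.
Set Implicit Arguments. Unset Strict Implicit. Unset Printing Implicit Defensive.

Section S. Variable gT : finGroupType.
Lemma C1core (y c f e : gT) : y ^+ 3 = 1 -> c ^+ 3 = 1 -> c * y = y * c * f ->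
  y * (y * c) * (y * c * (c * e)) = 1 -> e = (f ^ c^-1)^-1.
Proof.
move=> y3 c3 Hf H.
have H2 : y * y * y * (c * f * c * c * e) = 1.
  by rewrite -H !mulgA -(mulgA (y * y) c y) Hf !mulgA.
have y3' : y * y * y = 1 by rewrite -y3 expgS expgS expg1 mulgA.
move: H2; rewrite y3' mul1g => H2.
have c3' : c * c * c = 1 by rewrite -c3 expgS expgS expg1 mulgA.
have cc : c * c = c^-1 by apply/eqP; rewrite eq_mulgV1 invgK c3'.
move: H2; rewrite -(mulgA (c * f)) cc => H2.
rewrite conjgE invgK; apply/eqP; rewrite eq_sym eq_invg_mul !mulgA H2.
by [].
Qed.

Lemma norm3 (y h : gT) : (y * h^-1) ^+ 3 = h^-1 ^+ 3 -> y * y ^ h * y ^ (h * h) = 1.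
Proof.
move=> H; have : (y * h^-1) ^+ 3 * h ^+ 3 = 1 by rewrite H expgVn mulVg.
rewrite !expgS expg0 !mulg1 !conjgE => <-; by rewrite invMg !mulgA !mulgK !mulgKV.
Qed.
End S.

Section Basics.
Variables (gT : finGroupType) (G : {group gT}).
Local Notation L n := ('L_n(G)).

Lemma lcnG n x : x \in L n -> x \in G.
Proof. exact: (subsetP (lcn_sub n G)). Qed.

Lemma lcnJ n x g : x \in L n -> g \in G -> x ^ g \in L n.
Proof. by move=> Hx Hg; rewrite memJ_norm // (subsetP (lcn_norm n G)). Qed.

Lemma lcnR n x g : x \in L n -> g \in G -> [~ x, g] \in L n.+1.
Proof. by move=> Hx Hg; apply: (subsetP (lcnSnS n G)); apply: mem_commg. Qed.

Lemma lcnW n m x : n <= m -> x \in L m -> x \in L n.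
Proof. by move=> le; apply: (subsetP (lcn_sub_leq G le)). Qed.

Lemma comm_gen_closed (K : {group gT}) (A : {set gT}) x :
  G \subset 'N(K) -> x \in G -> A \subset G ->
  (forall a, a \in A -> [~ x, a] \in K) ->
  forall y, y \in <<A>> -> [~ x, y] \in K.
Proof.
move=> nKG Gx sAG HA.
pose S := [set y in G | [~ x, y] \in K].
have gS : group_set S.
  apply/group_setP; split; first by rewrite inE group1 commg1 group1.
  move=> y z; rewrite !inE => /andP[Gy Ky] /andP[Gz Kz].
  rewrite groupM // commgMJ groupM // memJ_norm //.
  exact: (subsetP nKG).
have sAS : <<A>> \subset Group gS.
  rewrite gen_subG; apply/subsetP=> a Aa; rewrite inE (subsetP sAG) //.
  exact: HA.
by move=> y /(subsetP sAS); rewrite inE => /andP[].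
Qed.

Lemma comm_gen_closedl (K : {group gT}) (A : {set gT}) x :
  G \subset 'N(K) -> x \in G -> A \subset G ->
  (forall a, a \in A -> [~ a, x] \in K) ->
  forall y, y \in <<A>> -> [~ y, x] \in K.
Proof.
move=> nKG Gx sAG HA y Ay.
rewrite -invg_comm groupV; apply: (comm_gen_closed nKG Gx sAG) => // a Aa.
by rewrite -invg_comm groupV HA.
Qed.

Lemma lcn_comm_aux j : forall i x y, x \in L i.+1 -> y \in L j.+1 ->
  [~ x, y] \in L (i + j).+2.
Proof.
elim: j => [|j IH] i x y Lx Ly.
  by rewrite addn0; apply: lcnR.
have nKG : G \subset 'N(L (i + j.+1).+2) by apply: lcn_norm.
have Gx : x \in G := lcnG Lx.
move: Ly; rewrite lcnSn => Ly.
apply: (comm_gen_closed nKG Gx _ _ Ly).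
  apply/subsetP=> _ /imset2P[b g Lb Gg ->]; rewrite groupR //; exact: lcnG Lb.
move=> _ /imset2P[b g Lb Gg ->].
have Gb := lcnG Lb.
rewrite -invg_comm groupV.
have := Hall_Witt_identity b g^-1 x; rewrite invgK => HW.
have t2 : [~ g^-1, x^-1, b] \in L (i + j.+1).+2.
  have : [~ g^-1, x^-1] \in L i.+2.
    by rewrite -invg_comm groupV; apply: lcnR; rewrite ?groupV.
  move/(IH i.+1 _ _)/(_ Lb); by rewrite addSn addnS.
have t3 : [~ x, b^-1, g^-1] \in L (i + j.+1).+2.
  rewrite addnS; apply: lcnR; last by rewrite groupV.
  by apply: IH; rewrite ?groupV.
have e : [~ b, g, x] ^ g^-1 = ([~ g^-1, x^-1, b] ^ x * [~ x, b^-1, g^-1] ^ b)^-1.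
  by apply/eqP; rewrite eq_mulgV1 invgK mulgA HW.
rewrite -(memJ_norm _ (subsetP nKG _ (groupVr Gg))) e groupV groupM // lcnJ //.
Qed.

Lemma lcn_comm i j x y : x \in L i.+1 -> y \in L j.+1 -> [~ x, y] \in L (i + j).+2.
Proof. exact: lcn_comm_aux. Qed.


Section Q.
Variable K : {group gT}.
Hypothesis nKG : G \subset 'N(K).
Lemma qM x y : x \in G -> y \in G -> coset K (x * y) = coset K x * coset K y.
Proof. by move=> Gx Gy; rewrite morphM // (subsetP nKG). Qed.
Lemma qJ x y : x \in G -> y \in G -> coset K (x ^ y) = coset K x ^ coset K y.
Proof. by move=> Gx Gy; rewrite morphJ // (subsetP nKG). Qed.
Lemma qR x y : x \in G -> y \in G -> coset K [~ x, y] = [~ coset K x, coset K y].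
Proof. by move=> Gx Gy; rewrite morphR // (subsetP nKG). Qed.
Lemma qV x : x \in G -> coset K (x^-1) = (coset K x)^-1.
Proof. by move=> Gx; rewrite morphV // (subsetP nKG). Qed.
Lemma q1 x : x \in K -> coset K x = 1.
Proof. exact: coset_id. Qed.
Lemma dropMid P x Q : x \in K -> P \in G -> Q \in G -> (P * x * Q \in K) = (P * Q \in K).
Proof.
move=> Kx GP GQ; rewrite -mulgA (conjgC x Q) mulgA groupMr //.
by rewrite memJ_norm // (subsetP nKG).
Qed.
Lemma swapK x y : x \in G -> y \in G -> (x * y \in K) = (y * x \in K).
Proof.
move=> Gx Gy; rewrite -(memJ_norm (y * x) (subsetP nKG _ Gy)).
by rewrite conjgE -mulgA mulKg.
Qed.
Lemma C2core x1 x2 x3 y1 y2 y3 a e k :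
  x1 \in G -> x2 \in G -> x3 \in G -> y1 \in G -> y2 \in G -> y3 \in G ->
  a \in G -> e \in G -> k \in G ->
  x1 \in K -> x3 \in K -> y2 \in K -> y3 \in K -> k \in K ->
  [~ x1 * x2 * x3, a] \in K ->
  ((x1 * x2 * x3) ^ a * (y1 * y2 * y3)) ^ e * k \in K -> x2 * y1 \in K.
Proof.
move=> G1 G2 G3 H1 H2 H3 Ga Ge Gk K1 K3 K2' K3' Kk Ka.
rewrite groupMr // memJ_norm; last by rewrite (subsetP nKG).
have GX : x1 * x2 * x3 \in G by rewrite !groupM.
have GY : y1 * y2 * y3 \in G by rewrite !groupM.
rewrite (conjg_mulR (x1 * x2 * x3) a) (dropMid Ka GX GY).
rewrite (mulgA _ (y1 * y2) y3) groupMr // (mulgA _ y1 y2) groupMr //.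
rewrite (dropMid K3 (groupM G1 G2) H1) -mulgA groupMl //.
Qed.
Lemma qK x : x \in G -> coset K x = 1 -> x \in K.
Proof. by move=> Gx; apply: coset_idr; rewrite (subsetP nKG). Qed.
End Q.

Definition itc (y : gT) (s : seq gT) := foldl (fun z g => [~ z, g]) y s.

Lemma itc_cons y g s : itc y (g :: s) = itc [~ y, g] s. Proof. by []. Qed.
Lemma itc_rcons y s g : itc y (rcons s g) = [~ itc y s, g].
Proof. by rewrite /itc foldl_rcons. Qed.
Lemma itc_cat y s1 s2 : itc y (s1 ++ s2) = itc (itc y s1) s2.
Proof. by rewrite /itc foldl_cat. Qed.

Lemma itc_lcn s : forall n y, y \in L n -> all (mem G) s -> itc y s \in L (n + size s).
Proof.
elim: s => [|g s IH] n y Ly /=; first by rewrite addn0.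
move=> /andP[Gg Gs]; rewrite addnS -addSn; apply: IH => //; exact: lcnR.
Qed.

Lemma lcn_RP j u v g : u \in L j -> v \in L j -> u * v \in L j.+1 -> g \in G ->
  [~ u, g] * [~ v, g] \in L j.+2.
Proof.
move=> Lu Lv Luv Gg.
have Gv := lcnG Lv.
have -> : u = (u * v) * v^-1 by rewrite mulgK.
rewrite commMgJ -mulgA groupM //; first by rewrite lcnJ ?groupV //; apply: lcnR.
set a := [~ v^-1, g].
have La : a \in L j.+1 by apply: lcnR; rewrite ?groupV.
have Ga := lcnG La.
have e1 : [~ v, g] = (a ^ v)^-1.
  apply/eqP; rewrite eq_sym eq_invg_mul.
  by rewrite -/a -[a ^ v * _]commMgJ mulVg comm1g.
rewrite e1 conjg_mulR invMg mulgA.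
have -> : a * [~ a, v]^-1 * a^-1 = ([~ a, v]^-1) ^ a^-1 by rewrite conjgE invgK mulgA.
by rewrite lcnJ ?groupV //; apply: lcnR.
Qed.

Lemma lcn_RPI s : forall j u v, u \in L j -> v \in L j -> u * v \in L j.+1 ->
  all (mem G) s -> itc u s * itc v s \in L (j + size s).+1.
Proof.
elim: s => [|g s IH] j u v Lu Lv Luv /=; first by rewrite addn0.
move=> /andP[Gg Gs]; rewrite addnS -addSn; apply: IH => //; try exact: lcnR.
exact: lcn_RP.
Qed.

Lemma lcn_C2 n y g h :
  (forall z k, z \in L n -> k \in G -> [~ z, k, k] \in L n.+3) ->
  y \in L n -> g \in G -> h \in G -> [~ y, g, h] * [~ y, h, g] \in L n.+3.
Proof.
move=> E Ly Gg Gh.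
have nKG : G \subset 'N(L n.+3) by apply: lcn_norm.
have Gy := lcnG Ly.
have Gk : g * h \in G by rewrite groupM.
have T := E y _ Ly Gk.
set a := [~ y, g]; set b := [~ y, h]; set e := [~ a, h].
have La : a \in L n.+1 by apply: lcnR.
have Lb : b \in L n.+1 by apply: lcnR.
have Le : e \in L n.+2 by apply: lcnR.
have Ga := lcnG La; have Gb := lcnG Lb; have Ge := lcnG Le.
have eyk : [~ y, g * h] = b * a * e by rewrite commgMR.
have ek : [~ b * a * e, g * h] =
   (([~ b, h] * [~ b, g] * [~ b, g, h]) ^ a * ([~ a, h] * [~ a, g] * [~ a, g, h])) ^ e
   * [~ e, g * h].
  by rewrite commMgJ commMgJ !commgMR.
move: T; rewrite eyk ek => T.
have LX : [~ b, h] * [~ b, g] * [~ b, g, h] \in L n.+2.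
  have h1 := lcnR Lb Gh; have h2 := lcnR Lb Gg.
  have h3 : [~ b, g, h] \in L n.+2 := lcnW (leqnSn _) (lcnR h2 Gh).
  by apply: groupM; first apply: groupM.
have Xa := lcnR LX Ga.
have K1 : [~ b, h] \in L n.+3 by exact: E.
have K2 : [~ a, g] \in L n.+3 by exact: E.
have K3 : [~ b, g, h] \in L n.+3 := lcnR (lcnR Lb Gg) Gh.
have K4 : [~ a, g, h] \in L n.+3 := lcnR (lcnR La Gg) Gh.
have K5 : [~ e, g * h] \in L n.+3 := lcnR Le Gk.
rewrite (swapK nKG) ?groupR //.
apply: (C2core nKG _ _ _ _ _ _ _ _ _ _ _ _ _ _ _ T) => //; by rewrite ?groupR.
Qed.


Lemma all_sub (s t : seq gT) : {subset s <= t} -> all (mem G) t -> all (mem G) s.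
Proof. by move=> st /allP Ht; apply/allP=> x /st /Ht. Qed.

Lemma all_mem (t : seq gT) x : x \in t -> all (mem G) t -> x \in G.
Proof. by move=> xt /allP /(_ x xt). Qed.

Lemma ar3 n : 0 < n -> n.+4 <= (n.+1 + n).+2.
Proof. lia. Qed.
Lemma ar1 p a b c : p + (a + (b + c.+2).+1) < ((p + (a + b.+1)).+2 + c).+1.
Proof. lia. Qed.
Lemma ar2 p a b c : (p + (a + b.+1 + c.+2)).+1 = (p + (a + (b + c.+2).+1)).+1.
Proof. lia. Qed.

Lemma lcn_REP m :
  (forall n, m <= n -> forall z k, z \in L n -> k \in G -> [~ z, k, k] \in L n.+3) ->
  forall s2 p y s1 a s3, m <= p -> y \in L p ->
  all (mem G) (s1 ++ a :: s2 ++ a :: s3) ->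
  itc y (s1 ++ a :: s2 ++ a :: s3) \in L (p + size (s1 ++ a :: s2 ++ a :: s3)).+1.
Proof.
move=> E; elim/last_ind => [|s2 b IH] p y s1 a s3 mp Ly Hall.
  have G1 : all (mem G) s1 by apply: all_sub Hall => x h; rewrite mem_cat h.
  have G3 : all (mem G) s3 by apply: all_sub Hall => x h; rewrite mem_cat /= !inE h !orbT.
  have Ga : a \in G by apply: all_mem Hall; rewrite mem_cat inE eqxx orbT.
  rewrite itc_cat !itc_cons.
  have Lz := itc_lcn Ly G1.
  have := itc_lcn (E _ (leq_trans mp (leq_addr _ _)) _ _ Lz Ga) G3.
  by rewrite size_cat /=; apply: lcnW; lia.
move: Hall; rewrite -cats1 -catA /= => Hall.
have Hall' : all (mem G) (s1 ++ a :: s2 ++ a :: b :: s3).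
  have P : perm_eq (s1 ++ a :: s2 ++ a :: b :: s3) (s1 ++ a :: s2 ++ b :: a :: s3).
    rewrite perm_cat2l perm_cons perm_cat2l.
    by apply/permP => q /=; rewrite addnCA.
  by apply: all_sub Hall => x; rewrite (perm_mem P).
have G1 : all (mem G) s1 by apply: all_sub Hall => x h; rewrite mem_cat h.
have G3 : all (mem G) s3 by apply: all_sub Hall => x h; rewrite !(mem_cat, inE) h !orbT.
have G2 : all (mem G) s2 by apply: all_sub Hall => x h; rewrite !(mem_cat, inE) h !orbT.
have Ga : a \in G by apply: all_mem Hall; rewrite mem_cat inE eqxx orbT.
have Gb : b \in G by apply: all_mem Hall; rewrite !(mem_cat, inE) eqxx !orbT.
have := IH p y s1 a (b :: s3) mp Ly Hall'.
have ew : forall c d, s1 ++ a :: s2 ++ c :: d :: s3 = (s1 ++ a :: s2) ++ [:: c, d & s3].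
  by move=> c d; rewrite -catA.
rewrite ew itc_cat !itc_cons.
rewrite ew itc_cat !itc_cons.
set z := itc y (s1 ++ a :: s2).
have Gs12 : all (mem G) (s1 ++ a :: s2) by rewrite all_cat G1 /= Ga G2.
have Lz := itc_lcn Ly Gs12.
have C := lcn_C2 (E _ (leq_trans mp (leq_addr _ _))) Lz Gb Ga.
have Lba : [~ z, b, a] \in L (p + size (s1 ++ a :: s2)).+2 by apply: lcnR => //; apply: lcnR.
have Lab : [~ z, a, b] \in L (p + size (s1 ++ a :: s2)).+2 by apply: lcnR => //; apply: lcnR.
have R := lcn_RPI Lba Lab C G3.
move=> Hv.
have key : itc [~ z, b, a] s3 \in L (p + size (s1 ++ a :: s2 ++ a :: b :: s3)).+1.
  have -> : itc [~ z, b, a] s3 =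
     (itc [~ z, b, a] s3 * itc [~ z, a, b] s3) * (itc [~ z, a, b] s3)^-1.
    by rewrite mulgK.
  rewrite groupM ?groupV //.
    move: R; apply: (subsetP (lcn_sub_leq _ _)).
    rewrite !size_cat /= ?size_cat /= ?size_cat /=; first [exact: ar1 | exact: ar2 | exact: esym (ar2 _ _ _ _)].
  move: Hv; rewrite itc_cat !itc_cons -/z; congr (_ \in L _); rewrite !size_cat /= ?size_cat /= ?size_cat /=; first [exact: ar1 | exact: ar2 | exact: esym (ar2 _ _ _ _)].
move: key; congr (_ \in L _); first by rewrite /z itc_cat.
rewrite !size_cat /= ?size_cat /= ?size_cat /=; exact: esym (ar2 _ _ _ _).
Qed.


Lemma comm_gen_closed' (K : {group gT}) (A : {set gT}) x :
  (forall z g, z \in K -> g \in G -> z ^ g \in K) -> x \in G -> A \subset G ->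
  (forall a, a \in A -> [~ x, a] \in K) ->
  forall y, y \in <<A>> -> [~ x, y] \in K.
Proof.
move=> nKG Gx sAG HA.
pose S := [set y in G | [~ x, y] \in K].
have gS : group_set S.
  apply/group_setP; split; first by rewrite inE group1 commg1 group1.
  move=> y z; rewrite !inE => /andP[Gy Ky] /andP[Gz Kz].
  by rewrite groupM // commgMJ groupM // nKG.
have sAS : <<A>> \subset Group gS.
  rewrite gen_subG; apply/subsetP=> a Aa; rewrite inE (subsetP sAG) //.
  exact: HA.
by move=> y /(subsetP sAS); rewrite inE => /andP[].
Qed.

Lemma lcn_GEN1 (K : {group gT}) (X : {set gT}) j :
  (forall z g, z \in K -> g \in G -> z ^ g \in K) -> X \subset G -> G \subset <<X>> ->
  (forall z x, z \in L j.+1 -> x \in X -> [~ z, x] \in K) -> L j.+2 \subset K.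
Proof.
move=> nK sXG sGX H; rewrite lcnSn gen_subG.
apply/subsetP=> _ /imset2P[z g Lz Gg ->].
apply: (comm_gen_closed' nK (lcnG Lz) sXG) => [a Xa|]; first exact: H.
exact: (subsetP sGX).
Qed.

Lemma lcn_GENk (X : {set gT}) n : X \subset G -> G \subset <<X>> ->
  forall k (K : {group gT}), (forall z g, z \in K -> g \in G -> z ^ g \in K) ->
  L (n + k).+2 \subset K ->
  (forall y s, y \in L n.+1 -> size s = k -> all (mem X) s -> itc y s \in K) ->
  L (n + k).+1 \subset K.
Proof.
move=> sXG sGX; elim=> [|k IH] K nK sLK H.
  by apply/subsetP=> y Ly; rewrite addn0 in Ly; exact: (H y [::] Ly erefl).
rewrite addnS; apply: (lcn_GEN1 nK sXG sGX) => z x Lz Xx.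
have Gx : x \in G := subsetP sXG x Xx.
pose S := [set z in L (n + k).+1 | [~ z, x] \in K].
have gS : group_set S.
  apply/group_setP; split; first by rewrite inE group1 comm1g group1.
  move=> u v; rewrite !inE => /andP[Lu Ku] /andP[Lv Kv].
  by rewrite groupM // commMgJ groupM // nK // (lcnG Lv).
have := IH (Group gS).
have nS : forall z g, z \in Group gS -> g \in G -> z ^ g \in Group gS.
  move=> u g; rewrite !inE => /andP[Lu Ku] Gg.
  rewrite lcnJ //= conjg_mulR commMgJ groupM //; first by apply: nK => //; rewrite groupR // (lcnG Lu).
  apply: (subsetP sLK); rewrite addnS; apply: lcnR => //; exact: lcnR.
move=> /(_ nS) H2.
have sub1 : L (n + k).+2 \subset Group gS.
  apply/subsetP=> u Lu; rewrite inE (lcnW (leqnSn _) Lu) /=.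
  apply: (subsetP sLK); rewrite addnS; exact: lcnR.
have H3 : forall y s, y \in L n.+1 -> size s = k -> all (mem X) s -> itc y s \in Group gS.
  move=> y s Ly ss Xs; rewrite inE.
  have Gs : all (mem G) s by apply/allP=> u /(allP Xs) /(subsetP sXG).
  have := itc_lcn Ly Gs; rewrite ss addSn => ->.
  rewrite -itc_rcons; apply: H => //; first by rewrite size_rcons ss.
  by rewrite all_rcons Xs andbT.
have := subsetP (H2 sub1 H3) z Lz; rewrite inE => /andP[].
by [].
Qed.


Lemma lcn_E (N : {group gT}) m :
  (forall x, x \in N -> x ^+ 3 = 1) ->
  (forall x h, x \in N -> h \in G -> (x * h) ^+ 3 = h ^+ 3) ->
  L m.+2 \subset N ->
  forall n, m.+2 <= n -> forall z k, z \in L n -> k \in G -> [~ z, k, k] \in L n.+3.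
Proof.
move=> N3 Nh sLN n mn y h Ly Gh.
have Gy := lcnG Ly.
have yN : y \in N by apply: (subsetP sLN); exact: lcnW mn Ly.
set c := [~ y, h].
have Lc : c \in L n.+1 by apply: lcnR.
have cN : c \in N by apply: (subsetP sLN); exact: lcnW (leq_trans mn (leqnSn _)) Lc.
have Gc := lcnG Lc.
have Hn := norm3 (Nh _ _ yN (groupVr Gh)).
have ey : y ^ h = y * c by rewrite conjg_mulR.
have eyy : y ^ (h * h) = y * c * (c * [~ c, h]).
  by rewrite conjgM ey conjMg ey conjg_mulR.
rewrite ey eyy in Hn.
have := C1core (N3 _ yN) (N3 _ cN) (commgC c y) Hn => ->.
rewrite groupV lcnJ ?groupV //.
case: n mn Ly Lc {Hn eyy ey} => [|n'] // mn Ly Lc.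
have Lf : [~ c, y] \in L (n'.+1 + n').+2 := lcn_comm Lc Ly.
apply: (lcnW _ Lf); apply: ar3.
by case: n' mn {Ly Lc Lf}.
Qed.

Lemma not_uniq_split (T : eqType) (s : seq T) :
  ~~ uniq s -> exists s1 a s2 s3, s = s1 ++ a :: s2 ++ a :: s3.
Proof.
elim: s => [|x s IH] //=; rewrite negb_and negbK => /orP[xs|/IH].
  by case/splitPr: xs => p1 p2; exists [::], x, p1, p2.
by case=> s1 [a [s2 [s3 ->]]]; exists (x :: s1), a, s2, s3.
Qed.

Lemma pigeon (X : {set gT}) s : all (mem X) s -> #|X| < size s -> ~~ uniq s.
Proof.
move=> Xs lt; apply/negP => U.
have : size s <= size (enum X).
  by apply: uniq_leq_size U _ => x /(allP Xs) xX; rewrite mem_enum.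
by rewrite -cardE leqNgt lt.
Qed.

Lemma lcn_stable j : L j.+1 \subset L j.+2 -> nilpotent G -> L j.+1 = 1.
Proof.
move=> sub nilG.
have H : forall t, L j.+1 \subset L (j.+1 + t).
  elim=> [|t IH]; first by rewrite addn0.
  apply: subset_trans sub _; rewrite addnS lcnSn addSn lcnSn.
  by apply: commSg; rewrite -addSn.
case/lcnP: nilG => k Lk.
apply/trivgP; rewrite -Lk; apply: subset_trans (H k.+1) _.
by apply: lcn_sub_leq; rewrite addnS ltnS leq_addl.
Qed.

Lemma lcn_bound (N : {group gT}) (X : {set gT}) d m :
  X \subset G -> G \subset <<X>> -> #|X| <= d -> nilpotent G ->
  (forall x, x \in N -> x ^+ 3 = 1) ->
  (forall x h, x \in N -> h \in G -> (x * h) ^+ 3 = h ^+ 3) ->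
  L m.+2 \subset N -> L (m.+2 + d).+1 = 1.
Proof.
move=> sXG sGX cX nilG N3 Nh sLN.
have E := lcn_E N3 Nh sLN.
apply: lcn_stable => //.
have -> : (m.+2 + d) = (m.+1 + d).+1 by rewrite addSn.
have := @lcn_GENk X m.+1 sXG sGX d.+1 (L (m.+1 + d.+1).+2).
rewrite addnS; apply.
- by move=> z g Lz Gg; apply: lcnJ.
- by [].
move=> y s Ly ss Xs.
have Gs : all (mem G) s by apply/allP=> u /(allP Xs) /(subsetP sXG).
have nu : ~~ uniq s by apply: (pigeon Xs); rewrite ss ltnS.
case: (not_uniq_split nu) => s1 [a [s2 [s3 es]]].
have := @lcn_REP m.+2 E s2 m.+2 y s1 a s3 (leqnn _) Ly.
rewrite -es => /(_ Gs); rewrite ss.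
by rewrite addnS addSn.
Qed.

End Basics.

Section Levi0.
Variable gT : finGroupType.
Lemma sq_inv (a : gT) : a ^+ 3 = 1 -> a * a = a^-1.
Proof.
move=> a3; apply/eqP; rewrite eq_mulgV1 invgK.
by rewrite -a3 expgS expgS expg1 mulgA.
Qed.

Lemma F1 (x y : gT) : x ^+ 3 = 1 -> y ^+ 3 = 1 -> (x * y) ^+ 3 = 1 -> (x * y^-1) ^+ 3 = 1 ->
  commute x (x ^ y).
Proof.
move=> x3 y3 xy3 xy'3.
have e1 : x * y * x = y^-1 * x^-1 * y^-1.
  have := sq_inv xy3; rewrite invMg => h.
  by rewrite -h !mulgA mulgK.
have e2 : x * y^-1 * x = y * x^-1 * y.
  have := sq_inv xy'3; rewrite invMg invgK => h.
  by rewrite -h !mulgA mulgKV.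
have yy : y * y = y^-1 := sq_inv y3.
rewrite /commute conjgE.
transitivity (y * x^-1 * y^-1).
  by rewrite !mulgA e2 -mulgA yy.
have yy' : y^-1 * y^-1 = y by rewrite -invMg yy invgK.
symmetry; by rewrite -(mulgA y^-1 (x * y) x) e1 !mulgA yy'.
Qed.
End Levi0.

Section Levi.
Variables (gT : finGroupType) (G : {group gT}).
Hypothesis G3 : forall x, x \in G -> x ^+ 3 = 1.
Local Notation L n := ('L_n(G)).
Local Notation phi := (coset 'L_5(G)).

Lemma engel2 y h : y \in G -> h \in G -> [~ y, h, h] = 1.
Proof.
move=> Gy Gh; apply/eqP/commgP.
have Gh' := groupVr Gh.
have c1 := F1 (G3 Gh') (G3 Gy) (G3 (groupM Gh' Gy)) (G3 (groupM Gh' (groupVr Gy))).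
rewrite commgEr; apply: commute_sym; apply: commuteM; last exact: commute_refl.
by have := commuteV (commute_sym c1); rewrite invgK => c2; apply: commute_sym.
Qed.

Lemma E_all n z k : z \in L n -> k \in G -> [~ z, k, k] \in L n.+3.
Proof. by move=> Lz Gk; rewrite engel2 ?group1 // (lcnG Lz). Qed.

Let nK5 : G \subset 'N(L 5) := lcn_norm 5 G.

Lemma phiJ4 x g : x \in L 4 -> g \in G -> phi (x ^ g) = phi x.
Proof.
move=> Lx Gg; have Gx := lcnG Lx.
by rewrite conjg_mulR (qM nK5 Gx (groupR Gx Gg)) (q1 (lcnR Lx Gg)) mulg1.
Qed.

Lemma phiC4 x g : x \in L 4 -> g \in G -> commute (phi x) (phi g).
Proof.
move=> Lx Gg; have Gx := lcnG Lx.
by apply/commgP; rewrite -(qR nK5 Gx Gg) (q1 (lcnR Lx Gg)).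
Qed.

Lemma phi_eq x y : x \in G -> y \in G -> x * y \in L 5 -> phi x * phi y = 1.
Proof. by move=> Gx Gy H; rewrite -(qM nK5 Gx Gy) (q1 H). Qed.

Lemma lcn_INV2 j z g : z \in L j -> g \in G -> [~ z, g^-1] * [~ z, g] \in L j.+2.
Proof.
move=> Lz Gg; have Gz := lcnG Lz.
set b := [~ z, g].
have Lb : b \in L j.+1 by apply: lcnR.
have Gb := lcnG Lb.
have e : [~ z, g^-1] = (b^-1) ^ g^-1.
  have h : b * [~ z, g^-1] ^ g = 1 by rewrite -commgMJ mulVg commg1.
  have h2 : [~ z, g^-1] ^ g = b^-1 by rewrite -(mulKg b ([~ z, g^-1] ^ g)) h mulg1.
  by rewrite -h2 conjgK.
rewrite e conjg_mulR -mulgA.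
have -> : [~ b^-1, g^-1] * b = b * [~ b^-1, g^-1] ^ b by rewrite conjgC.
by rewrite mulKg lcnJ // lcnR ?groupV.
Qed.

Lemma L1 x : x \in G -> x \in L 1. Proof. by []. Qed.

Lemma S_cd a b c d : a \in G -> b \in G -> c \in G -> d \in G ->
  [~ a, b, c, d] * [~ a, b, d, c] \in L 5.
Proof.
move=> Ga Gb Gc Gd.
exact: (lcn_C2 (@E_all 2) (lcnR (L1 Ga) Gb) Gc Gd).
Qed.

Lemma S_bc a b c d : a \in G -> b \in G -> c \in G -> d \in G ->
  [~ a, b, c, d] * [~ a, c, b, d] \in L 5.
Proof.
move=> Ga Gb Gc Gd.
have H := lcn_C2 (@E_all 1) (L1 Ga) Gb Gc.
exact: (lcn_RP (lcnR (lcnR (L1 Ga) Gb) Gc) (lcnR (lcnR (L1 Ga) Gc) Gb) H Gd).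
Qed.

Lemma S_ab a b c d : a \in G -> b \in G -> c \in G -> d \in G ->
  [~ b, a, c, d] * [~ a, b, c, d] \in L 5.
Proof.
move=> Ga Gb Gc Gd.
have Lu : [~ b, a] \in L 2 := lcnR (L1 Gb) Ga.
have Lv : [~ a, b] \in L 2 := lcnR (L1 Ga) Gb.
have H1 : [~ b, a] * [~ a, b] \in L 3 by rewrite -invg_comm mulVg group1.
have H2 := lcn_RP Lu Lv H1 Gc.
exact: (lcn_RP (lcnR Lu Gc) (lcnR Lv Gc) H2 Gd).
Qed.


Lemma invE (T : finGroupType) (a b : T) : a * b = 1 -> a = b^-1.
Proof. by move=> H; rewrite -(mulgK b a) H mul1g. Qed.

Lemma commVd (c d : gT) : [~ c^-1, d^-1] = [~ c, d] ^ (d * c)^-1.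
Proof. by rewrite /commg /conjg !invgK invMg !mulgA mulgK mulgV mul1g. Qed.

Lemma HW u c d : u \in L 2 -> c \in G -> d \in G ->
  phi [~ [~ c, d], u] = phi [~ u, c, d].
Proof.
move=> Lu Gc Gd.
have Gu := lcnG Lu.
have Gc' := groupVr Gc; have Gd' := groupVr Gd; have Gu' := groupVr Gu.
have hw := Hall_Witt_identity u c^-1 d; rewrite invgK in hw.
have LP1 : [~ u, c, d] \in L 4 := lcnR (lcnR Lu Gc) Gd.
have LW2 : [~ c^-1, d^-1, u] \in L 4 := lcn_comm (lcnR (L1 Gc') Gd') Lu.
have Lu' : u^-1 \in L 2 by rewrite groupV.
have Ldu : [~ d, u^-1] \in L 3 by rewrite -invg_comm groupV; apply: lcnR.
have LW3 : [~ d, u^-1, c^-1] \in L 4 := lcnR Ldu Gc'.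
have GP1 := lcnG LP1; have GW2 := lcnG LW2; have GW3 := lcnG LW3.
have := congr1 phi hw.
rewrite (qM nK5 (groupM (groupJ GP1 Gc') (groupJ GW2 Gd)) (groupJ GW3 Gu)).
rewrite (qM nK5 (groupJ GP1 Gc') (groupJ GW2 Gd)).
rewrite (phiJ4 LP1 Gc') (phiJ4 LW2 Gd) (phiJ4 LW3 Gu) morph1 => H.
have Lcd : [~ c, d] \in L 2 := lcnR (L1 Gc) Gd.
have Gcd := lcnG Lcd.
have GW : (d * c)^-1 \in G by rewrite groupV groupM.
set t := [~ [~ c, d], (d * c)^-1].
have Lt : t \in L 3 := lcnR Lcd GW.
have Gt := lcnG Lt.
have LQ2 : [~ [~ c, d], u] \in L 4 := lcn_comm Lcd Lu.
have GQ2 := lcnG LQ2.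
have eW2 : phi [~ c^-1, d^-1, u] = phi [~ [~ c, d], u].
  rewrite commVd conjg_mulR -/t commMgJ (qM nK5 (groupJ GQ2 Gt) (groupR Gt Gu)).
  by rewrite (phiJ4 LQ2 Gt) (q1 (lcn_comm Lt Lu)) mulg1.
have Lud : [~ u, d] \in L 3 := lcnR Lu Gd.
have Gud := lcnG Lud.
have Lud' : [~ u, d]^-1 \in L 3 by rewrite groupV.
have hxy : [~ d, u^-1] * [~ u, d]^-1 \in L 4.
  rewrite -invg_comm -invMg groupV.
  have R0 : u^-1 * u \in L 3 by rewrite mulVg group1.
  have := lcn_RP Lu' Lu R0 Gd.
  by rewrite (swapK (lcn_norm 4 G)) // ?groupR.
have R1 := phi_eq GW3 (groupR (groupVr Gud) Gc') (lcn_RP Ldu Lud' hxy Gc').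
have R0' : [~ u, d]^-1 * [~ u, d] \in L 4 by rewrite mulVg group1.
have R2 := phi_eq (groupR (groupVr Gud) Gc') (groupR Gud Gc') (lcn_RP Lud' Lud R0' Gc').
have R3 := phi_eq (groupR Gud Gc') (groupR Gud Gc) (lcn_INV2 Lud Gc).
have R4 := phi_eq GP1 (groupR Gud Gc) (lcn_C2 (@E_all 2) Lu Gc Gd).
have eW3 : phi [~ d, u^-1, c^-1] = phi [~ u, c, d].
  rewrite (invE R1) (invE R2) invgK (invE R3) (invE R4).
  by [].
move: H; rewrite eW2 eW3 => H.
have cPQ := phiC4 LP1 GQ2.
have P3 : phi [~ u, c, d] ^+ 3 = 1 by rewrite -morphX ?(subsetP nK5) // G3 ?morph1.
have := sq_inv P3 => sq.
have cPQ' : phi [~ u, c, d] * phi [~ [~ c, d], u] = phi [~ [~ c, d], u] * phi [~ u, c, d] := cPQ.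
move: H; rewrite cPQ' -mulgA sq => H.
by rewrite (invE H) invgK.
Qed.

Lemma Levi_word a b c d : a \in G -> b \in G -> c \in G -> d \in G ->
  [~ a, b, c, d] \in L 5.
Proof.
move=> Ga Gb Gc Gd.
have R1 := phi_eq _ _ (S_bc Ga Gb Gc Gd).
have R2 := phi_eq _ _ (S_ab Ga Gc Gb Gd).
have R3 := phi_eq _ _ (S_cd Gc Ga Gb Gd).
have R4 := phi_eq _ _ (S_bc Gc Ga Gd Gb).
have Lu : [~ a, b] \in L 2 := lcnR (L1 Ga) Gb.
have Lv : [~ c, d] \in L 2 := lcnR (L1 Gc) Gd.
have H1 := HW Lu Gc Gd.
have H2 := HW Lv Ga Gb.
have GA0 : [~ a, b, c, d] \in G by rewrite !groupR.
apply: (qK nK5 GA0).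
have e04 : phi [~ a, b, c, d] = phi [~ c, d, a, b].
  rewrite (invE (R1 _ _)) ?groupR //.
  rewrite -(invE (R2 _ _)) ?groupR //.
  rewrite (invE (R3 _ _)) ?groupR //.
  by rewrite (invE (R4 _ _)) ?invgK ?groupR.
have einv : phi [~ c, d, a, b] = (phi [~ a, b, c, d])^-1.
  rewrite -H1 -H2 -(qV nK5) ?groupR // ?(lcnG Lu) ?(lcnG Lv) //.
  by rewrite invg_comm.
have P3 : phi [~ a, b, c, d] ^+ 3 = 1 by rewrite -morphX ?(subsetP nK5) // G3 ?morph1.
move: einv; rewrite -e04 => einv.
have xx : phi [~ a, b, c, d] * phi [~ a, b, c, d] = 1 by rewrite {2}einv mulgV.
by move: P3; rewrite expgS expgS expg1 xx mulg1.
Qed.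


Lemma Levi : nilpotent G -> 'L_4(G) = 1.
Proof.
move=> nilG; apply: lcn_stable => //.
have := @lcn_GENk _ G G 0 (subxx _) (subset_gen _) 3 ('L_5(G))%G.
apply.
- by move=> z g Lz Gg; apply: lcnJ.
- by [].
move=> y [|b [|c [|d [|? ?]]]] // Ly _ /=.
rewrite !andbT => /and3P[Gb Gc Gd].
exact: Levi_word (lcnG Ly) Gb Gc Gd.
Qed.

End Levi.


Lemma exp_dvd (gT : finGroupType) (G : {group gT}) r :
  3.-group G -> exponent G <= 3 ^ r -> exponent G %| 3 ^ r.
Proof.
rewrite -pnat_exponent => /p_natP[k ->] le; apply: dvdn_exp2l.
by rewrite -(@leq_exp2l 3).
Qed.

Lemma semi1 (gT : finGroupType) (G : {group gT}) a b :
  strongly_semi_p_abelian 3 G -> a \in G -> b \in G ->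
  ((a * b) ^+ 3 = 1 <-> a ^+ 3 * b ^+ 3 = 1).
Proof. by move=> SS Ga Gb; have := SS 1%N (ltn0Sn 0) a b Ga Gb; rewrite expn1. Qed.

Lemma norm_of_conj (gT : finGroupType) (A : {set gT}) (G : {group gT}) :
  (forall x g, x \in A -> g \in G -> x ^ g \in A) -> G \subset 'N(A).
Proof.
move=> H; apply/subsetP=> g Gg; apply/normP/eqP.
rewrite eqEcard cardJg leqnn andbT; apply/subsetP=> y; rewrite mem_conjg => Hy.
by rewrite -(conjgKV g y); apply: H.
Qed.

Lemma expg3S (gT : finGroupType) (w : gT) i : (w ^+ (3 ^ i)) ^+ 3 = w ^+ (3 ^ i.+1).
Proof. by rewrite -expgM expnSr. Qed.

Section Step.
Variables (gT : finGroupType) (G : {group gT}).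
Hypothesis SS : strongly_semi_p_abelian 3 G.

Definition Nset := [set x in G | x ^+ 3 == 1].

Lemma Nset_group : group_set Nset.
Proof.
apply/group_setP; split; first by rewrite inE group1 expg1n eqxx.
move=> x y; rewrite !inE => /andP[Gx /eqP x3] /andP[Gy /eqP y3].
rewrite groupM //; apply/eqP; apply/(semi1 SS Gx Gy).
by rewrite x3 y3 mulg1.
Qed.

Canonical Ngroup := Group Nset_group.

Lemma nNG : G \subset 'N(Ngroup).
Proof.
apply: norm_of_conj => x g; rewrite /= !inE => /andP[Gx /eqP x3] Gg.
by rewrite groupJ //= -conjXg x3 conj1g eqxx.
Qed.

Lemma cosetN1 w : w \in G -> (coset Ngroup w = 1 <-> w ^+ 3 = 1).
Proof.
move=> Gw; split=> [H | H].
  have := coset_idr (subsetP nNG w Gw) H; rewrite /= inE => /andP[_ /eqP].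
  by [].
by apply: coset_id; rewrite /= inE Gw H eqxx.
Qed.

Lemma quo_semi : strongly_semi_p_abelian 3 (G / Ngroup).
Proof.
move=> i i0 _ _ /morphimP[a Na Ga ->] /morphimP[b Nb Gb ->].
have Gai := groupX (3 ^ i) Ga; have Gbi := groupX (3 ^ i) Gb.
rewrite -(morphM _ Na Nb) -(morphX _ _ (groupM Na Nb)) -(morphX _ _ Na) -(morphX _ _ Nb).
rewrite -(morphM _ (groupX _ Na) (groupX _ Nb)) /=.
have SSi := SS (ltn0Sn i) Ga Gb.
have S1 := semi1 SS Gai Gbi.
split=> H.
  apply/(cosetN1 (groupM Gai Gbi)); apply/S1; rewrite !expg3S; apply/SSi.
  by rewrite -expg3S; apply/(cosetN1 (groupX _ (groupM Ga Gb))).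
apply/(cosetN1 (groupX _ (groupM Ga Gb))); rewrite expg3S; apply/SSi.
by rewrite -!expg3S; apply/S1; apply/(cosetN1 (groupM Gai Gbi)).
Qed.

Lemma N_h x h : x \in Ngroup -> h \in G -> (x * h) ^+ 3 = h ^+ 3.
Proof.
rewrite /= inE => /andP[Gx /eqP x3] Gh.
have Gh' := groupVr Gh.
have : (x * h * h^-1) ^+ 3 = 1 by rewrite mulgK.
move/(semi1 SS (groupM Gx Gh) Gh'); rewrite expgVn => e.
by rewrite -[LHS]mulg1 -(mulVg (h ^+ 3)) mulgA e mul1g.
Qed.

End Step.

Lemma eq_subxx_gen (gT : finGroupType) (G : {group gT}) (X : {set gT}) :
  <<X>> = G -> G \subset <<X>>.
Proof. by move=> ->. Qed.

Lemma arith_main r d : r.+1 * (d + 1) + 3 = (r * (d + 1) + 2).+2 + d.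
Proof. lia. Qed.

Lemma main_ind d r : forall (gT : finGroupType) (G : {group gT}),
  3.-group G -> strongly_semi_p_abelian 3 G -> exponent G %| 3 ^ r.+1 ->
  generated_by_at_most d G -> nil_class G <= r * (d + 1) + 3.
Proof.
elim: r => [|r IH] gT G pG SS eG [X [cX gX]].
  have G3 : forall x, x \in G -> x ^+ 3 = 1.
    by move=> x Gx; move/exponentP: eG => /(_ x Gx); rewrite expn1.
  rewrite mul0n add0n; apply/(lcn_nil_classP 3 (pgroup_nil pG)).
  exact: Levi G3 (pgroup_nil pG).
pose N := Ngroup SS.
have nN : G \subset 'N(N) := nNG SS.
have sXG : X \subset G by rewrite -gX subset_gen.
have pQ : 3.-group (G / N) := quotient_pgroup _ pG.
have eQ : exponent (G / N) %| 3 ^ r.+1.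
  apply/exponentP => _ /morphimP[x Nx Gx ->].
  rewrite -(morphX _ _ Nx) /=; apply/(cosetN1 SS (groupX _ Gx)); rewrite expg3S.
  by move/exponentP: eG; apply.
have gQ : generated_by_at_most d (G / N).
  exists (X / N); split; first exact: leq_trans (leq_morphim _ _) cX.
  by rewrite -quotient_gen ?gX // (subset_trans sXG nN).
have cQ := IH _ _ pQ (@quo_semi _ _ SS) eQ gQ.
have nilQ := pgroup_nil pQ; have nilG := pgroup_nil pG.
move/(lcn_nil_classP _ nilQ): cQ => LQ.
have sLN : 'L_((r * (d + 1) + 2).+2)(G) \subset N.
  rewrite (_ : (r * (d + 1) + 2).+2 = (r * (d + 1) + 3).+1); last by rewrite !addnS.
  rewrite -(quotient_sub1 (subset_trans (lcn_sub _ _) nN)).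
  by rewrite /quotient morphim_lcn // LQ.
have N3 : forall x, x \in N -> x ^+ 3 = 1.
  by move=> x; rewrite /= inE => /andP[_ /eqP].
have := lcn_bound sXG (eq_subxx_gen gX) cX nilG N3 (@N_h _ _ SS) sLN.
move=> H; apply/(lcn_nil_classP _ nilG).
by rewrite arith_main.
Qed.

End Aux.
Import Aux.
Unset Implicit Arguments. Set Strict Implicit.

Theorem theorem1p1 (gT : finGroupType) (G : {group gT}) (r d : nat) :
  3.-group G ->
  strongly_semi_p_abelian 3 G ->
  0 < r ->
  exponent G <= 3 ^ r ->
  generated_by_at_most d G ->
  nil_class G <= (r - 1) * (d + 1) + 3.
Proof.
move=> pG SS r0 eG gG.
case: r r0 eG => [|r] // _ eG.
rewrite subn1 /=.
exact: main_ind pG SS (exp_dvd pG eG) gG.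
Qed.
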